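(* For the 1-nearest-neighbor (1-NN) learning algorithm, there exist noisy-label data distributions (i.e. two group distributions $D_A,D_B$ over $\mathcal{X}\times\{-1,1\}$, with $\mathcal{X}$ a metric space, under which labels are subject to random flipping) and a training-set size $n$ such that the induced evolutionary prediction game has a stable coexistence equilibrium, i.e. a stable Nash equilibrium $\mathbf{p}^*$ with $p^*_A>0$ and $p^*_B>0$.
   Context: 1-NN: given a training set $S=\{(x_i,y_i)\}_{i=1}^n$, predicts for $x$ the label of its nearest training point. The learning algorithm samples $S\sim D_{\mathbf{p}}^n$ i.i.d. from the mixture $D_{\mathbf{p}}=p_AD_A+p_BD_B$ ($\mathbf{p}\in\Delta^2$) and outputs the 1-NN classifier $h_S$. The evolutionary prediction game is $F_k(\mathbf{p})=\mathbb{E}_{S}[\Pr_{(x,y)\sim D_k}[h_S(x)=y]]$. Nash equilibrium: $\mathrm{supp}(\mathbf{p}^* )\subseteq\arg\max_kF_k(\mathbf{p}^* )$. Stability refers to population dynamics $\dot{\mathbf{p}}=V_F(\mathbf{p})$ with $V_F$ continuous, tangent to the simplex, positively correlated with $F$, and Nash-stationary or imitative (e.g. replicator); an equilibrium is stable if it attracts all nearby states. *)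

(* Defs.v *)
From HB Require Import structures.
From mathcomp Require Import all_boot all_order all_algebra.
From mathcomp Require Import all_classical all_reals all_analysis.
Set Implicit Arguments. Unset Strict Implicit. Unset Printing Implicit Defensive.
Import Order.TTheory GRing.Theory Num.Theory.
Import numFieldNormedType.Exports.
Local Open Scope ring_scope.
Local Open Scope classical_set_scope.

(* Conventions: labels {-1,1} are encoded as bool (true = +1, false = -1);
   the two groups/strategies are encoded as bool (true = A, false = B);
   a population state p = (p_A, p_B) is a pair of reals. *)

Section Defs.
Variable R : realType.

Definition is_metric (X : Type) (d : X -> X -> R) : Prop :=
  [/\ (forall x y, 0 <= d x y), (forall x y, d x y = 0 <-> x = y),
      (forall x y, d x y = d y x) & (forall x y z, d x z <= d x y + d y z)].

(** 1-NN prediction on a labelled sample s (ties broken in favour of the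
    earliest sample point; a non-empty sample is always used below). *)
Fixpoint nn_aux (X : Type) (d : X -> X -> R) (x : X) (best : X * bool)
    (s : seq (X * bool)) : X * bool :=
  if s is z :: s' then nn_aux d x (if d x z.1 < d x best.1 then z else best) s'
  else best.

Definition one_nn (X : Type) (d : X -> X -> R) (s : seq (X * bool)) (x : X) : bool :=
  if s is z :: s' then (nn_aux d x z s').2 else true.

(** Data distributions over X x {-1,1} with finite support: the point of
    index i : 'I_m is pts i; D (i, y) is the probability of (pts i, y). *)
Definition noisy_label_dist (X : Type) (m : nat) (pts : 'I_m -> X)
    (D : 'I_m * bool -> R) : Prop :=
  exists (mu : 'I_m -> R) (f : X -> bool) (eta : R),
    [/\ (forall i, 0 <= mu i), \sum_(i < m) mu i = 1, 0 < eta, eta < 1 / 2 &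
        forall i y, D (i, y) = mu i * (if y == f (pts i) then 1 - eta else eta)].

Definition simplex2 : set (R * R) :=
  [set p | [/\ 0 <= p.1, 0 <= p.2 & p.1 + p.2 = 1]].

Definition mixture (m : nat) (DA DB : 'I_m * bool -> R) (p : R * R)
    (z : 'I_m * bool) : R := p.1 * DA z + p.2 * DB z.

Definition sample_prob (m n : nat) (P : 'I_m * bool -> R)
    (S : {ffun 'I_n -> 'I_m * bool}) : R := \prod_(j < n) P (S j).

Definition nn_accuracy (X : Type) (d : X -> X -> R) (m : nat) (pts : 'I_m -> X)
    (n : nat) (S : {ffun 'I_n -> 'I_m * bool}) (Dk : 'I_m * bool -> R) : R :=
  \sum_(z : 'I_m * bool)
     Dk z * (one_nn d [seq (pts (S j).1, (S j).2) | j <- enum 'I_n] (pts z.1)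
               == z.2)%:R.

Definition game (X : Type) (d : X -> X -> R) (m : nat) (pts : 'I_m -> X)
    (n : nat) (DA DB : 'I_m * bool -> R) (p : R * R) : R * R :=
  (\sum_(S : {ffun 'I_n -> 'I_m * bool})
      sample_prob (mixture DA DB p) S * nn_accuracy d pts S DA,
   \sum_(S : {ffun 'I_n -> 'I_m * bool})
      sample_prob (mixture DA DB p) S * nn_accuracy d pts S DB).

Definition comp (p : R * R) (k : bool) : R := if k then p.1 else p.2.

Definition nash (F : R * R -> R * R) (p : R * R) : Prop :=
  simplex2 p /\ forall k, 0 < comp p k -> forall j, comp (F p) j <= comp (F p) k.

Definition tangent_field (V : R * R -> R * R) : Prop :=
  forall p, simplex2 p ->
    [/\ (V p).1 + (V p).2 = 0, (p.1 = 0 -> 0 <= (V p).1) & (p.2 = 0 -> 0 <= (V p).2)].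

Definition positively_correlated (F V : R * R -> R * R) : Prop :=
  forall p, simplex2 p -> V p <> (0, 0) ->
    0 < (V p).1 * (F p).1 + (V p).2 * (F p).2.

Definition nash_stationary (F V : R * R -> R * R) : Prop :=
  forall p, simplex2 p -> (V p = (0, 0) <-> nash F p).

(** imitative dynamics (Sandholm): V_i = sum_j p_j p_i r_ji - p_i sum_j p_j r_ij,
    with nonnegative conditional imitation rates r satisfying net monotonicity *)
Definition imitative (F V : R * R -> R * R) : Prop :=
  exists r : bool -> bool -> R * R -> R,
    forall p, simplex2 p ->
    [/\ (forall i j, 0 <= r i j p),
        (forall i, comp (V p) i =
           \sum_(j : bool) comp p j * comp p i * r j i p
           - comp p i * \sum_(j : bool) comp p j * r i j p) &
        (forall i j k, comp (F p) i <= comp (F p) j <->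
                       r k i p - r i k p <= r k j p - r j k p)].

Definition admissible_dynamics (F V : R * R -> R * R) : Prop :=
  [/\ {within simplex2, continuous V}, tangent_field V,
      positively_correlated F V & (nash_stationary F V \/ imitative F V)].

(** p* is stable: it attracts all nearby states, i.e. every solution of the
    dynamics in the simplex starting close enough to p* converges to p*. *)
Definition attracting (V : R * R -> R * R) (ps : R * R) : Prop :=
  exists2 delta : R, 0 < delta &
    forall a b : R -> R,
      (forall t, 0 <= t -> simplex2 (a t, b t)) ->
      `|a 0 - ps.1| < delta -> `|b 0 - ps.2| < delta ->
      {within [set t : R | 0 <= t], continuous a} ->
      {within [set t : R | 0 <= t], continuous b} ->
      (forall t, 0 < t ->
         [/\ derivable a t 1, derivable b t 1,
             a^`() t = (V (a t, b t)).1 & b^`() t = (V (a t, b t)).2]) ->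
      (a t @[t --> +oo] --> ps.1) /\ (b t @[t --> +oo] --> ps.2).

End Defs.

(* Main.v *)
Require Import Defs.
From HB Require Import structures.
From mathcomp Require Import all_boot all_order all_algebra.
From mathcomp Require Import all_classical all_reals all_analysis.
From mathcomp Require Import ring lra.
Import Order.TTheory GRing.Theory Num.Theory.
Import numFieldNormedType.Exports.
Local Open Scope ring_scope.
Local Open Scope classical_set_scope.

Section S.
Variable R : realType.


Definition dnat (i j : nat) : nat :=
  match i, j with
  | 0, 1 | 1, 0 => 3
  | 0, 2 | 2, 0 => 4
  | 1, 2 | 2, 1 => 2
  | _, _ => 0 end.
Definition dd (i j : 'I_3) : R := (dnat i j)%:R.

Lemma sum_ffun2 (T : finType) (F : {ffun 'I_2 -> T} -> R) :
  \sum_S F S = \sum_z1 \sum_z2 F [ffun j : 'I_2 => if val j == 0%N then z1 else z2].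
Proof.
rewrite pair_bigA /=.
rewrite (reindex (fun z : T * T => [ffun j : 'I_2 => if val j == 0%N then z.1 else z.2])) //=.
exists (fun S : {ffun 'I_2 -> T} => (S ord0, S ord_max)).
  by move=> [z1 z2] _; rewrite !ffunE.
move=> S _; apply/ffunP => j; rewrite ffunE.
case: j => [[|[|//]] Hj] /=.
  by congr (S _); apply: val_inj.
by congr (S _); apply: val_inj.
Qed.

Lemma game2 (DA DB : 'I_3 * bool -> R) (p : R * R) (Dk : 'I_3 * bool -> R) :
  \sum_(S : {ffun 'I_2 -> 'I_3 * bool})
      sample_prob (mixture DA DB p) S * nn_accuracy dd id S Dk =
  \sum_z1 \sum_z2 mixture DA DB p z1 * mixture DA DB p z2 *
     \sum_(z : 'I_3 * bool) Dk z *
        ((if dd z.1 z2.1 < dd z.1 z1.1 then z2 else z1).2 == z.2)%:R.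
Proof.
rewrite sum_ffun2; apply: eq_bigr => z1 _; apply: eq_bigr => z2 _.
rewrite /sample_prob /nn_accuracy !big_ord_recr big_ord0 /= !ffunE /= mul1r.
rewrite enum_ordSl enum_ordSl enum_ord0 /=.
by rewrite !ffunE /= -!surjective_pairing.
Qed.
Definition muA (i : 'I_3) : R := if val i == 2%N then 1 else 0.
Definition muB (i : 'I_3) : R := match val i with 0 => 1/4 | 1 => 1/20 | _ => 7/10 end.
Definition fA (i : 'I_3) : bool := false.
Definition fB (i : 'I_3) : bool := val i == 1%N.
Definition DA (z : 'I_3 * bool) : R := muA z.1 * (if z.2 == fA z.1 then 1 - 1/10 else 1/10).
Definition DB (z : 'I_3 * bool) : R := muB z.1 * (if z.2 == fB z.1 then 1 - 1/20 else 1/20).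

Lemma sum6 (F : 'I_3 * bool -> R) : \sum_z F z =
  F (ord0, true) + F (ord0, false) + F (inord 1, true) + F (inord 1, false)
  + F (inord 2, true) + F (inord 2, false).
Proof.
rewrite (eq_bigr (fun z => F (z.1, z.2))); last by case.
rewrite -(pair_bigA _ (fun a b => F (a, b))) /= !big_ord_recl big_ord0 !big_bool /= addr0 !addrA.
congr (_ + _ + _ + _ + _ + _); congr (F (_, _)); apply: val_inj => //=; by rewrite inordK.
Qed.

Lemma gdiff (p : R * R) : (game dd id 2 DA DB p).1 - (game dd id 2 DA DB p).2 =
  (-160 * p.1^+2 + 53 * p.1 * p.2 + 81 * p.2^+2) / (200 * 200).
Proof.
rewrite /game /= !game2 !sum6.
rewrite /mixture /DA /DB /muA /muB /fA /fB /dd /= !inordK //=.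
rewrite !ltr_nat /=.
by field.
Qed.


Lemma derU (a : R -> R) (c k t : R) : derivable a t 1 ->
  derivable (fun s => (a s - c)^+2 + k * s) t 1 /\
  derive1 (fun s => (a s - c)^+2 + k * s) t = 2 * (a t - c) * derive1 a t + k.
Proof.
move=> da.
have H : is_derive t 1 ((a - cst c)^+2 + k \*o id)
   ((2%:R * (a - cst c) t ^+ 1) *: (derive1 a t - 0) + k * 1).
  have da' : is_derive t 1 a (derive1 a t) by rewrite derive1E; exact: derivableP.
  apply: is_deriveD.
case: H => H1 H2.
split; first exact: H1.
rewrite derive1E H2 /=.
change ((2 * ((a t - c) ^+ 1)) * (derive1 a t - 0) + k * 1 = 2 * (a t - c) * derive1 a t + k).
by rewrite expr1 subr0 mulr1.
Qed.

Lemma nonincr (f : R -> R) : {within [set t | 0 <= t], continuous f} ->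
  (forall t, 0 < t -> derivable f t 1 /\ derive1 f t <= 0) ->
  forall s t, 0 <= s -> s <= t -> f t <= f s.
Proof.
move=> cf df s t s0 st.
have t0 : 0 <= t by apply: le_trans st.
apply: (@ler0_derive1_le_cc R f 0 t) => //.
- by move=> x /[!in_itv] /= /andP[x0 _]; case: (df x x0).
- by move=> x /[!in_itv] /= /andP[x0 _]; case: (df x x0).
- apply: continuous_subspaceW cf => x /=; rewrite in_itv /= => /andP[] //.
- by rewrite in_itv /= t0 lexx.
- by rewrite in_itv /= s0 st.
Qed.

Lemma Ucont (a : R -> R) (c k : R) : {within [set t | 0 <= t], continuous a} ->
  {within [set t | 0 <= t], continuous (fun s => (a s - c)^+2 + k * s)}.
Proof.
move=> ca x.
apply: cvgD.
  by rewrite expr2; apply: cvgM; apply: cvgB; [exact: ca|exact: cvg_cst|exact: ca|exact: cvg_cst].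
apply: cvgM; first exact: cvg_cst.
exact: (@continuous_subspaceT _ _ _ id (fun _ => cvg_id) x).
Qed.

Lemma vcont (V : R * R -> R * R) : {within @simplex2 R, continuous V} ->
  {in `]0, 1[%R, continuous (fun y : R => (V (y, 1 - y)).1)}.
Proof.
move=> cV x xin.

have /andP[x0 x1] : (0 < x) && (x < 1) by move: xin; rewrite in_itv.
have sx : @simplex2 R (x, 1 - x) by split => /=; lra.
have hc : (fun y : R => (y, 1 - y)) @ x --> (x, 1 - x).
  have h2 : (fun y : R => 1 - y) @ x --> 1 - x by apply: cvgB; [exact: cvg_cst|exact: cvg_id].
  exact: (cvg_pair cvg_id h2).
have hphi : (fun y : R => (y, 1 - y)) @ x --> within (@simplex2 R) (nbhs (x, 1 - x)).
  move=> P /= hP.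
  have h : \forall y \near x, (@simplex2 R (y, 1 - y) -> P (y, 1 - y)) := hc _ hP.
  have hin := near_in_itvoo xin.
  change (\forall y \near x, P (y, 1 - y)).
  near=> y.
  have : y \in `]0, 1[%R by near: y.
  rewrite in_itv /= => /andP[y0 y1].

  have hs : @simplex2 R (y, 1 - y) by rewrite /simplex2 /=; split; lra.
  by apply: (near h y).
have cV' : V @ within (@simplex2 R) (nbhs (x, 1 - x)) --> V (x, 1 - x).
  by rewrite nbhs_subspace_in //; exact: cV.
have H := cvg_comp _ _ hphi cV'.
exact: (cvg_comp _ fst H cvg_fst).
Unshelve. all: end_near.
Qed.

Lemma sq_lt (x y : R) : 0 <= y -> x^+2 < y^+2 -> -y < x < y.
Proof. by move=> y0 h; apply/andP; split; nra. Qed.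

Lemma sq_far (x e : R) : 0 < e -> e^+2 <= x^+2 -> -e < x -> e <= x.
Proof. by move=> e0 h1 h2; nra. Qed.

Lemma stable (F V : R * R -> R * R) (c : R) :
  0 < c -> c < 1 ->
  (forall y, 0 <= y -> y < c -> (F (y, 1 - y)).2 < (F (y, 1 - y)).1) ->
  (forall y, c < y -> y <= 1 -> (F (y, 1 - y)).1 < (F (y, 1 - y)).2) ->
  admissible_dynamics F V -> attracting V (c, 1 - c).
Proof.
move=> c0 c1 Hpos Hneg [cV tV pcV ns].
pose v y := (V (y, 1 - y)).1.
have simp y : 0 <= y <= 1 -> @simplex2 R (y, 1 - y).
  by move=> /andP[y0 y1]; rewrite /simplex2 /=; split; lra.
have V2 y : 0 <= y <= 1 -> (V (y, 1 - y)).2 = - v y.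
  by move=> hy; have [h _ _] := tV _ (simp y hy); rewrite /v; lra.
have sw y : 0 <= y <= 1 -> (y - c) * v y <= 0.
  move=> hy; have [->|vn] := eqVneq (v y) 0; first by rewrite mulr0.
  have hV : V (y, 1 - y) <> (0, 0) by move=> e; move: vn; rewrite /v e eqxx.
  have := pcV _ (simp y hy) hV; rewrite (V2 y hy) mulNr => hp.
  have hp' : 0 < v y * ((F (y, 1 - y)).1 - (F (y, 1 - y)).2) by rewrite mulrBr; lra.
  have /andP[y0 y1] := hy.
  case: (ltgtP y c) => [yc|yc|->]; last by rewrite subrr mul0r.
  - have h := Hpos y y0 yc.
    have vp : 0 < v y by move: hp'; rewrite pmulr_lgt0 // subr_gt0.
    nra.
  - have h := Hneg y yc y1.
    have vp : v y < 0.
      move: hp'; rewrite -mulrNN pmulr_lgt0; last by rewrite oppr_gt0 subr_lt0.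
      by rewrite oppr_gt0.
    nra.
have vnz y : 0 < y < 1 -> y != c -> v y != 0.
  move=> /andP[y0 y1] yc.
  have hy : 0 <= y <= 1 by rewrite !ltW.
  case: ns => [nsV | [r hr]].
  - apply/negP => /eqP v0.
    have hV0 : V (y, 1 - y) = (0, 0).
      by rewrite [V _]surjective_pairing V2 // -/(v y) v0 oppr0.
    have [_ hn] := (nsV _ (simp y hy)).1 hV0.
    have h1 := hn true y0 false.
    have h2 : Defs.comp (F (y, 1 - y)) true <= Defs.comp (F (y, 1 - y)) false.
      by apply: hn; rewrite /=; lra.
    move: h1 h2 => /= h1 h2.
    case: (ltgtP y c) yc => [yc'|yc'|//] _.
    + have := Hpos y (ltW y0) yc'; lra.
    + have := Hneg y yc' (ltW y1); lra.
  - have [hr0 hcomp hmono] := hr _ (simp y hy).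
    have e := hcomp true; rewrite /= !big_bool /= in e.
    have ev : v y = y * (1 - y) * (r false true (y, 1 - y) - r true false (y, 1 - y)).
      by rewrite /v e; ring.
    have yy : 0 < y * (1 - y) by apply: mulr_gt0; lra.
    rewrite ev; apply: mulf_neq0; first by rewrite gt_eqF.
    case: (ltgtP y c) yc => [yc'|yc'|//] _.
    + have h := Hpos y (ltW y0) yc'.
      have hm := hmono true false true; rewrite /= subrr in hm.
      have : ~ (0 <= r true false (y, 1 - y) - r false true (y, 1 - y)).
        by move/hm; lra.
      move/negP; rewrite -ltNge => hl.
      by apply: lt0r_neq0; lra.
    + have h := Hneg y yc' (ltW y1).
      have hm := hmono false true false; rewrite /= subrr in hm.
      have : ~ (0 <= r false true (y, 1 - y) - r true false (y, 1 - y)).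
        by move/hm; lra.
      move/negP; rewrite -ltNge => hl.
      by apply: ltr0_neq0; lra.
have ss y : 0 < y < 1 -> y != c -> (y - c) * v y < 0.
  move=> hy yc; rewrite lt_neqAle sw; last by case/andP: hy => ? ?; rewrite !ltW.
  by rewrite andbT mulf_neq0 // ?subr_eq0 // vnz.
pose d := Num.min c (1 - c) / 2.
have d0 : 0 < d by rewrite /d divr_gt0 // lt_min c0 subr_gt0 c1.
have dc : d <= c / 2 by rewrite /d ler_pM2r // ge_min lexx.
have dc' : d <= (1 - c) / 2 by rewrite /d ler_pM2r // ge_min lexx orbT.
exists d => // a b hs ha0 hb0 ca cb hd.
have a_in t : 0 <= t -> 0 <= a t <= 1.
  by move=> t0; have := hs t t0; rewrite /simplex2 /= => -[h1 h2 h3]; rewrite h1 /=; lra.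
have bE t : 0 <= t -> b t = 1 - a t.
  by move=> t0; have := hs t t0; rewrite /simplex2 /= => -[h1 h2 h3]; lra.
have hda t : 0 < t -> derivable a t 1 /\ derive1 a t = v (a t).
  move=> t0; have [da _ ea _] := hd t t0; split => //.
  by rewrite ea bE // ltW.
have Umon k : (forall t, 0 < t -> 2 * (a t - c) * v (a t) + k <= 0) ->
    forall s t, 0 <= s -> s <= t ->
    (a t - c)^+2 + k * t <= (a s - c)^+2 + k * s.
  move=> H; apply: (@nonincr (fun s => (a s - c)^+2 + k * s)).
    exact: Ucont.
  move=> t t0; have [da ea] := hda t t0; have [du eu] := derU a c k t da.
  by split => //; rewrite eu ea; exact: H.
have Wmon s t : 0 <= s -> s <= t -> (a t - c)^+2 <= (a s - c)^+2.
  move=> s0 st; have := Umon 0 _ s t s0 st; rewrite !mul0r !addr0; apply.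
  move=> u u0; rewrite addr0 -mulrA; have := sw (a u) (a_in u (ltW u0)); lra.
have W0 : (a 0 - c)^+2 < d^+2.
  move: ha0; rewrite ltr_norml /= => /andP[h1 h2]; nra.
have near_c t : 0 <= t -> c - d < a t < c + d.
  move=> t0; have := Wmon 0 t (lexx _) t0 => h.
  apply/andP; split; nra.
have hcont lo hi : 0 < lo -> hi < 1 ->
    {within `[lo, hi], continuous (fun y => (y - c) * v y)}.
  move=> lo0 hi1; apply: continuous_subspace_itv => y.
  rewrite in_itv /= => /andP[ly yh].
  apply: cvgM; first by apply: cvgB; [exact: cvg_id|exact: cvg_cst].
  by apply: vcont => //; rewrite in_itv /=; apply/andP; split; lra.
have conva : a t @[t --> +oo] --> c.
  apply/cvgrPdist_lt => e e0.
  pose e' := Num.min e d.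
  have e'0 : 0 < e' by rewrite lt_min e0 d0.
  have e'e : e' <= e by rewrite ge_min lexx.
  have e'd : e' <= d by rewrite ge_min lexx orbT.
  suff [T T0 hT] : exists2 T, 0 <= T & (a T - c)^+2 < e'^+2.
    exists T; split; first exact: num_real.
    move=> t Tt; have := Wmon T t T0 (ltW Tt) => h.
    have /andP[h1 h2] := @sq_lt (a t - c) e' (ltW e'0) (le_lt_trans h hT).
    rewrite ltr_norml; apply/andP; split; lra.
  case: (pselect (exists2 T, 0 <= T & (a T - c)^+2 < e'^+2)) => // hno.
  exfalso.
  have far t : 0 <= t -> e'^+2 <= (a t - c)^+2.
    move=> t0; rewrite leNgt; apply/negP => h; apply: hno; by exists t.
  have [m1 m1in hm1] := @EVT_max R (fun y => (y - c) * v y) (c - d) (c - e')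
     ltac:(lra) (hcont (c - d) (c - e') ltac:(lra) ltac:(lra)).
  have [m2 m2in hm2] := @EVT_max R (fun y => (y - c) * v y) (c + e') (c + d)
     ltac:(lra) (hcont (c + e') (c + d) ltac:(lra) ltac:(lra)).
  move: m1in m2in; rewrite !in_itv /= => /andP[m1a m1b] /andP[m2a m2b].
  have hm1n : (m1 - c) * v m1 < 0.
    by apply: ss; [apply/andP; split; lra | rewrite lt_eqF //; lra].
  have hm2n : (m2 - c) * v m2 < 0.
    by apply: ss; [apply/andP; split; lra | rewrite gt_eqF //; lra].
  pose mu := Num.min (- ((m1 - c) * v m1)) (- ((m2 - c) * v m2)).
  have mu0 : 0 < mu by rewrite lt_min !oppr_gt0 hm1n hm2n.
  have mu1 : mu <= - ((m1 - c) * v m1) by rewrite ge_min lexx.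
  have mu2 : mu <= - ((m2 - c) * v m2) by rewrite ge_min lexx orbT.
  have key := Umon (2 * mu) _ 0 (d^+2 / (2 * mu)) (lexx _) _.
  have : (a (d ^+ 2 / (2 * mu)) - c) ^+ 2 + 2 * mu * (d ^+ 2 / (2 * mu)) <=
         (a 0 - c) ^+ 2 + 2 * mu * 0.
    apply: key.
    move=> t t0.
    have /andP[n1 n2] := near_c t (ltW t0).
    have ft := far t (ltW t0).
    have [lt1|gt1] := leP (a t) (c - e').
    + have := hm1 (a t); rewrite in_itv /= lt1 andbT => /(_ (ltW n1)) h.
      rewrite -mulrA; lra.
    + have ge2 : c + e' <= a t by have := @sq_far (a t - c) e' e'0 ft ltac:(lra); lra.
      have := hm2 (a t); rewrite in_itv /= ge2 /= => /(_ (ltW n2)) h.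
      rewrite -mulrA; lra.
    by apply: divr_ge0; [apply: sqr_ge0 | lra].
  rewrite mulr0 addr0 mulrCA mulfV ?mulr1; last by rewrite gt_eqF // mulr_gt0.
  have := sqr_ge0 (a (d ^+ 2 / (2 * mu)) - c); lra.
split => //.
apply: (@cvg_trans _ ((1 - a t) @[t --> +oo])).
  apply: near_eq_cvg; exists 0; split; first exact: num_real.
  by move=> t t0; rewrite bE // ltW.
by apply: cvgB => //; exact: cvg_cst.
Qed.

Definition sD : R := Num.sqrt (233 * 233 + 360).
Definition cst_c : R := (sD - 109) / 264.

Lemma sD_sq : sD ^+ 2 = 233 * 233 + 360.
Proof. by rewrite /sD sqr_sqrtr //; lra. Qed.

Lemma sD_ge0 : 0 <= sD.
Proof. exact: sqrtr_ge0. Qed.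

Lemma sD_bounds : 233 < sD /\ sD < 234.
Proof. have h := sD_sq; have h0 := sD_ge0; split; nra. Qed.

Lemma c_bounds : 0 < cst_c /\ cst_c < 1.
Proof. have [h1 h2] := sD_bounds; rewrite /cst_c; split; lra. Qed.

Lemma N_pos (y : R) : 0 <= y -> y < cst_c ->
  0 < -160 * y^+2 + 53 * y * (1 - y) + 81 * (1 - y)^+2.
Proof.
move=> y0 yc; have h := sD_sq; have h0 := sD_ge0.
have hy : 264 * y + 109 < sD by move: yc; rewrite /cst_c; lra.
have : (264 * y + 109)^+2 < sD^+2 by nra.
rewrite h => h2; nra.
Qed.

Lemma N_neg (y : R) : cst_c < y ->
  -160 * y^+2 + 53 * y * (1 - y) + 81 * (1 - y)^+2 < 0.
Proof.
move=> yc; have h := sD_sq; have h0 := sD_ge0.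
have hy : sD < 264 * y + 109 by move: yc; rewrite /cst_c; lra.
have : sD^+2 < (264 * y + 109)^+2 by nra.
rewrite h => h2; nra.
Qed.

Lemma N_zero : -160 * cst_c^+2 + 53 * cst_c * (1 - cst_c) + 81 * (1 - cst_c)^+2 = 0.
Proof.
have e : -160 * cst_c^+2 + 53 * cst_c * (1 - cst_c) + 81 * (1 - cst_c)^+2 =
   (sD^+2 - (233 * 233 + 360)) * (-1 / 528).
  by rewrite /cst_c; field.
by rewrite e sD_sq subrr mul0r.
Qed.

Lemma dd_metric : is_metric dd.
Proof.
split.
- by move=> x y; rewrite /dd ler0n.
- move=> x y; rewrite /dd; split.
    move=> /eqP; rewrite pnatr_eq0; case: x => [[|[|[|//]]] Hx]; case: y => [[|[|[|//]]] Hy] //= _;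
    by apply: val_inj.
  by move=> ->; case: y => [[|[|[|//]]] Hy].
- by move=> x y; case: x => [[|[|[|//]]] Hx]; case: y => [[|[|[|//]]] Hy].
- move=> x y z; rewrite /dd -natrD ler_nat.
  by case: x => [[|[|[|//]]] Hx]; case: y => [[|[|[|//]]] Hy]; case: z => [[|[|[|//]]] Hz].
Qed.

Lemma DA_noisy : noisy_label_dist (id : 'I_3 -> 'I_3) DA.
Proof.
exists muA, fA, (1/10); split.
- by move=> i; rewrite /muA; case: ifP => _; lra.
- rewrite !big_ord_recl big_ord0 /muA /=; lra.
- lra.
- lra.
- by [].
Qed.

Lemma DB_noisy : noisy_label_dist (id : 'I_3 -> 'I_3) DB.
Proof.
exists muB, fB, (1/20); split.
- by move=> i; rewrite /muB; case: (val i) => [|[|n]]; lra.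
- rewrite !big_ord_recl big_ord0 /muB /=; lra.
- lra.
- lra.
- by [].
Qed.
End S.

Theorem theorem6 (R : realType) :
  exists (X : Type) (d : X -> X -> R) (m : nat) (pts : 'I_m -> X)
         (DA DB : 'I_m * bool -> R) (n : nat) (ps : R * R),
    [/\ is_metric d, noisy_label_dist pts DA, noisy_label_dist pts DB,
        (0 < n)%N &
        [/\ nash (game d pts n DA DB) ps, 0 < ps.1, 0 < ps.2 &
            forall V : R * R -> R * R,
              admissible_dynamics (game d pts n DA DB) V -> attracting V ps]].
Proof.
exists 'I_3, (@dd R), 3, id, (@DA R), (@DB R), 2, (cst_c R, 1 - cst_c R).
have [c0 c1] := c_bounds R.
have Hpos : forall y : R, 0 <= y -> y < cst_c R ->
   (game (@dd R) id 2 (@DA R) (@DB R) (y, 1 - y)).2 <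
   (game (@dd R) id 2 (@DA R) (@DB R) (y, 1 - y)).1.
  move=> y y0 yc; rewrite -subr_gt0 gdiff /=.
  by apply: divr_gt0; [exact: N_pos | lra].
have Hneg : forall y : R, cst_c R < y -> y <= 1 ->
   (game (@dd R) id 2 (@DA R) (@DB R) (y, 1 - y)).1 <
   (game (@dd R) id 2 (@DA R) (@DB R) (y, 1 - y)).2.
  move=> y yc y1; rewrite -subr_lt0 gdiff /=.
  have hp : 0 < ((200:R) * 200)^-1 by rewrite invr_gt0; lra.
  by rewrite pmulr_llt0 //; exact: N_neg.
split => //.
- exact: dd_metric.
- exact: DA_noisy.
- exact: DB_noisy.
split => /=.
- have e := @gdiff R (cst_c R, 1 - cst_c R); rewrite /= N_zero mul0r in e.
  split; first by rewrite /simplex2 /=; split; lra.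
  by move=> k _ j; case: k; case: j => /=; lra.
- exact: c0.
- lra.
- by move=> V HV; exact: (@stable R _ _ _ c0 c1 Hpos Hneg HV).
Qed.
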